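(* Let $n,m$ be positive integers, $\lambda=(\lambda_1,\dots,\lambda_n)\in\mathcal{P}^m_n$, and let $k_{i,j}=k_{i,j}(\lambda)$ be defined recursively by $$k_{i,j}=\min\left\{m,\left\lceil\frac{\lambda_i-\sum_{\ell=j+1}^n k_{i,\ell}+\sum_{\ell=i+1}^j k_{\ell,j}}{j-i+1}\right\rceil\right\},\quad 1\le i\le j\le n.$$ Then $\lambda_i=\sum_{j=i}^n k_{i,j}$ for every $i\in\{1,\dots,n\}$.
   Context: $\mathcal{P}^m_n$ is the set of integer partitions $(\lambda_1\ge\cdots\ge\lambda_n\ge0)$ with $\lambda_i\le m(n-i+1)$ for all $i$. The recursion is carried out in order of decreasing $i$ and, for fixed $i$, decreasing $j$. *)

(* Defs.v *)
From mathcomp Require Import all_boot all_order all_algebra.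
Set Implicit Arguments. Unset Strict Implicit. Unset Printing Implicit Defensive.
Import Order.TTheory GRing.Theory Num.Theory.

(* Partitions are encoded as lam : nat -> nat, with lam i = lambda_i for
   1 <= i <= n (values outside 1..n are irrelevant). *)
Definition in_P (m n : nat) (lam : nat -> nat) : Prop :=
  (forall i, 1 <= i < n -> lam i.+1 <= lam i)%N /\
  (forall i, 1 <= i <= n -> lam i <= m * (n - i + 1))%N.

Local Open Scope ring_scope.

Definition k_rec (m n : nat) (lam : nat -> nat) (k : nat -> nat -> int) : Prop :=
  forall i j : nat, (1 <= i)%N -> (i <= j)%N -> (j <= n)%N ->
    k i j = Order.min (m%:Z)
      (Num.ceil (((lam i)%:Z - \sum_(j.+1 <= l < n.+1) k i l
                   + \sum_(i.+1 <= l < j.+1) k l j)%:~R / ((j - i + 1)%:R) : rat)).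

(* Main.v *)
Require Import Defs.
From mathcomp Require Import all_boot all_order all_algebra.
From mathcomp Require Import zify.
Import Order.TTheory GRing.Theory Num.Theory.
Local Open Scope ring_scope.

Definition Sr (n : nat) (k : nat -> nat -> int) i j := \sum_(j.+1 <= l < n.+1) k i l.
Definition Cc (k : nat -> nat -> int) i j := \sum_(i.+1 <= l < j.+1) k l j.

Lemma ceil_le (x z : int) (d : nat) : (0 < d)%N ->
  (Num.ceil (x%:~R / d%:R : rat) <= z) = (x <= z * d%:Z).
Proof.
move=> d0; rewrite ceil_le_int ler_pdivrMr ?ltr0n //.
have -> : (d%:R : rat) = (d%:Z)%:~R by [].
by rewrite -intrM ler_int.
Qed.

Lemma ceil_ge0' (x : int) (d : nat) : (0 < d)%N -> 0 <= x ->
  0 <= Num.ceil (x%:~R / d%:R : rat).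
Proof.
move=> d0 x0; rewrite -(ceil0 rat); apply: le_ceil.
by apply: divr_ge0; rewrite ?ler0n // ler0z.
Qed.

Lemma krecE m n lam k i j : k_rec m n lam k -> (1 <= i)%N -> (i <= j)%N -> (j <= n)%N ->
  k i j = Order.min (m%:Z)
     (Num.ceil (((lam i)%:Z - Sr n k i j + Cc k i j)%:~R / ((j - i + 1)%:R) : rat)).
Proof. by move=> H h1 h2 h3; rewrite (H i j h1 h2 h3). Qed.

Lemma Sr_step n k i j : (j < n)%N -> Sr n k i j = k i j.+1 + Sr n k i j.+1.
Proof. by move=> h; rewrite /Sr big_ltn. Qed.

Lemma Sr_n n k i : Sr n k i n = 0.
Proof. by rewrite /Sr big_geq. Qed.

Lemma Cc_ii k i : Cc k i i = 0.
Proof. by rewrite /Cc big_geq. Qed.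

Lemma Cc_step k i j : (i < j)%N -> Cc k i j = k i.+1 j + Cc k i.+1 j.
Proof. by move=> h; rewrite /Cc big_ltn. Qed.

Lemma Cc_ge0 k i j : (forall l, (i < l <= j)%N -> 0 <= k l j) -> 0 <= Cc k i j.
Proof.
move=> H; rewrite /Cc big_nat_cond; apply: sumr_ge0 => l /andP[/andP[h1 h2] _].
by apply: H; rewrite h1.
Qed.

Lemma row (n m : nat) (lam : nat -> nat) (k : nat -> nat -> int) i :
  (0 < m)%N -> in_P m n lam -> k_rec m n lam k -> (1 <= i <= n)%N ->
  (forall i', (i < i' <= n)%N ->
     (lam i')%:Z = \sum_(i' <= j < n.+1) k i' j /\
     forall j, (i' <= j <= n)%N -> 0 <= k i' j) ->
  (lam i)%:Z = \sum_(i <= j < n.+1) k i j /\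
     forall j, (i <= j <= n)%N -> 0 <= k i j.
Proof.
move=> m0 [Pdec Pbd] Hk /andP[i1 iN] H.
have Cpos : forall j, (i <= j <= n)%N -> 0 <= Cc k i j.
  move=> j /andP[h1 h2]; apply: Cc_ge0 => l /andP[l1 l2].
  by have [_ ->] := H l ltac:(lia); lia.
have Up : forall t j, (n - j)%N = t -> (i <= j <= n)%N ->
    (lam i)%:Z - Sr n k i j <= m%:Z * (j - i + 1)%N%:Z.
  elim=> [|t IH] j hj /andP[h1 h2].
    have -> : j = n by lia.
    by rewrite Sr_n subr0 lez_nat; have := Pbd i ltac:(lia).
  have jn : (j < n)%N by lia.
  have := IH j.+1 ltac:(lia) ltac:(lia).
  rewrite (Sr_step n k i j jn) (@krecE m n lam k i j.+1 Hk i1 ltac:(lia) ltac:(lia)).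
  have := Cpos j.+1 ltac:(lia).
  rewrite opprD addrA addrAC.
  set R := _ - Sr n k i j.+1; set C := Cc k i j.+1.
  set c := Num.ceil _.
  have hc : R + C <= c * (j.+1 - i + 1)%N%:Z.
    by rewrite -ceil_le // addn1.
  clearbody R C c.
  have -> : (j.+1 - i + 1 = (j - i + 1).+1)%N by lia.
  move: hc; have -> : (j.+1 - i + 1 = (j - i + 1).+1)%N by lia.
  move: (j - i + 1)%N => D.
  case: (lerP (m%:Z) c) => hmc.
    lia.
  nia.
have Low : forall j, (i <= j <= n)%N -> 0 <= (lam i)%:Z - Sr n k i j.
  case: (ltnP i n) => [iltn|inn]; last first.
    move=> j hj; have -> : j = n by lia.
    by rewrite Sr_n subr0.
  have [Hs Hnn] := H i.+1 ltac:(lia).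
  have R'0 : forall j, (i <= j <= n)%N -> 0 <= (lam i.+1)%:Z - Sr n k i.+1 j.
    move=> j hj; rewrite Hs /Sr (@big_cat_nat _ _ _ j.+1) /=; try lia.
    rewrite addrK big_nat_cond; apply: sumr_ge0 => l /andP[/andP[l1 l2] _].
    apply: Hnn; lia.
  have Q : forall t j, (n - j)%N = t -> (i <= j <= n)%N ->
      (lam i.+1)%:Z - Sr n k i.+1 j <= (lam i)%:Z - Sr n k i j.
    elim=> [|t IH] j hj /andP[h1 h2].
      have -> : j = n by lia.
      by rewrite !Sr_n !subr0 lez_nat; apply: Pdec; lia.
    have jn : (j < n)%N by lia.
    have := IH j.+1 ltac:(lia) ltac:(lia).
    have ea := @krecE m n lam k i j.+1 Hk i1 ltac:(lia) ltac:(lia).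
    have eb := @krecE m n lam k i.+1 j.+1 Hk ltac:(lia) ltac:(lia) ltac:(lia).
    rewrite (Cc_step k i j.+1 ltac:(lia)) in ea.
    rewrite (Sr_step n k i j jn) (Sr_step n k i.+1 j jn).
    move: ea eb.
    set a := k i j.+1; set b := k i.+1 j.+1.
    set R := _ - Sr n k i j.+1; set R' := _ - Sr n k i.+1 j.+1.
    set C' := Cc k i.+1 j.+1.
    set ca := Num.ceil _; set cb := Num.ceil _.
    move=> ea eb hRR.
    have am : a <= m by rewrite ea ge_min lexx.
    have aca : a <= ca by rewrite ea ge_min lexx orbT.
    suff : a <= b + (R - R').
      by rewrite /R /R'; lia.
    move: eb; case: (lerP (m%:Z) cb) => hmc eb.
      rewrite eb; lia.
    have hX : R' + C' <= cb * (j.+1 - i.+1 + 1)%N%:Z.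
      by rewrite -ceil_le // addn1.
    have hca : ca <= b + (R - R').
      rewrite ceil_le; last lia.
      rewrite eb; move: hX.
      have -> : (j.+1 - i + 1 = (j - i + 1).+1)%N by lia.
      have -> : (j.+1 - i.+1 + 1 = (j - i + 1))%N by lia.
      move: (j - i + 1)%N => D.
      clearbody R R' C' cb; nia.
    exact: le_trans aca hca.
  move=> j hj; apply: le_trans (R'0 j hj) _; exact: Q.
have Kpos : forall j, (i <= j <= n)%N -> 0 <= k i j.
  move=> j /andP[h1 h2].
  rewrite (@krecE m n lam k i j Hk i1 h1 h2) le_min /=.
  apply: ceil_ge0'; first by rewrite addn1.
  apply: addr_ge0; [apply: Low | apply: Cpos]; lia.
split=> //.
rewrite big_ltn; last lia.
rewrite (@krecE m n lam k i i Hk i1 (leqnn i) iN) Cc_ii addr0 subnn add0n divr1.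
rewrite intrKceil min_r.
  by rewrite -/(Sr n k i i) subrK.
by have := Up _ i erefl ltac:(lia); rewrite subnn add0n mulr1.
Qed.

Theorem corollary4p4 (n m : nat) (lam : nat -> nat) (k : nat -> nat -> int) :
  (0 < n)%N -> (0 < m)%N -> in_P m n lam -> k_rec m n lam k ->
  forall i : nat, (1 <= i <= n)%N ->
    (lam i)%:Z = \sum_(i <= j < n.+1) k i j.
Proof.
move=> n0 m0 HP Hk.
have all : forall t i, (n - t <= i)%N -> (1 <= i <= n)%N ->
    (lam i)%:Z = \sum_(i <= j < n.+1) k i j /\
    forall j, (i <= j <= n)%N -> 0 <= k i j.
  elim=> [|t IH] i hi hi1.
    apply: (@row n m lam k i m0 HP Hk hi1) => i' hi'; lia.
  apply: (@row n m lam k i m0 HP Hk hi1) => i' hi'; apply: IH; lia.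
move=> i hi; exact: (all n i ltac:(lia) hi).1.
Qed.
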